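(* Let $n\ge 2$ and let $B$ be an $n\times n$ agreement matrix. Then $IA_\epsilon(B)$ exists. Moreover, if $l$ and $m$ are the numbers of non-null columns and non-null rows of $B$ respectively, then $$IA_\epsilon(B)=\begin{cases}\frac{n-l}{n}&\text{if }H(Y_B^+)=0,\\[2pt] \frac{n-m}{n}&\text{if }H(X_B^+)=0,\\[2pt] 1+\frac{H(Y_B^+)-H((X_BY_B)^+)}{H(X_B^+)}&\text{if }0<H(X_B^+)\le H(Y_B^+),\\[2pt] 1+\frac{H(X_B^+)-H((X_BY_B)^+)}{H(Y_B^+)}&\text{if }0<H(Y_B^+)\le H(X_B^+).\end{cases}$$
   Context: An $n\times n$ agreement matrix $B$ has nonnegative entries $B[y][x]$ (row $y$, column $x$), not all zero. A row (column) is non-null if not all of its entries are $0$. For any $n\times n$ matrix $M$ with nonnegative real entries not all zero, let $S_M=\sum_{y,x}M[y][x]$ and define random variables $X_M$ on $\{1,\dots,n\}$ with $P(X_M=x)=\sum_yM[y][x]/S_M$, $Y_M$ with $P(Y_M=y)=\sum_xM[y][x]/S_M$, and the joint variable $X_MY_M$ with $P(X_MY_M=(y,x))=M[y][x]/S_M$. $H$ is Shannon entropy in base 2, defined only when all probabilities are positive. The information agreement is $IA(M)=\frac{H(X_M)+H(Y_M)-H(X_MY_M)}{\min\{H(X_M),H(Y_M)\}}$. For $\epsilon>0$, the $0$-freed matrix $B_\epsilon$ is obtained from $B$ by replacing every zero entry by $\epsilon$, and $IA_\epsilon(B)=\lim_{\epsilon\to0^+}IA(B_\epsilon)$. For a random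 variable $Z$, the refined variable $Z^+$ is $Z$ restricted to values of positive probability, with $H(Z^+)=-\sum_{z:\,p_Z(z)>0}p_Z(z)\log_2p_Z(z)$. *)

(* Defs.v *)
From HB Require Import structures.
From mathcomp Require Import all_boot all_order all_algebra.
From mathcomp Require Import all_classical all_reals all_analysis.
Set Implicit Arguments. Unset Strict Implicit. Unset Printing Implicit Defensive.
Import Order.TTheory GRing.Theory Num.Theory.
Import numFieldNormedType.Exports.
Local Open Scope ring_scope.

Section Defs.
Variable R : realType.

Definition log2 (x : R) : R := ln x / ln 2.

(* Shannon entropy (base 2) of a finite distribution p, summing over all values;
   it is only applied where all probabilities are positive. *)
Definition entropy (T : finType) (p : T -> R) : R :=
  - \sum_(t : T) p t * log2 (p t).

(* entropy of the refined variable Z^+ : sum over values of positive probability *)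
Definition entropy_plus (T : finType) (p : T -> R) : R :=
  - \sum_(t : T | 0 < p t) p t * log2 (p t).

Variable n : nat.

(* M y x : row y, column x *)
Definition Ssum (M : 'M[R]_n) : R := \sum_(y < n) \sum_(x < n) M y x.

Definition pX (M : 'M[R]_n) (x : 'I_n) : R := (\sum_(y < n) M y x) / Ssum M.
Definition pY (M : 'M[R]_n) (y : 'I_n) : R := (\sum_(x < n) M y x) / Ssum M.
Definition pXY (M : 'M[R]_n) (yx : 'I_n * 'I_n) : R := M yx.1 yx.2 / Ssum M.

Definition IA (M : 'M[R]_n) : R :=
  (entropy (pX M) + entropy (pY M) - entropy (pXY M))
    / Num.min (entropy (pX M)) (entropy (pY M)).

Definition zero_freed (B : 'M[R]_n) (eps : R) : 'M[R]_n :=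
  \matrix_(y, x) (if B y x == 0 then eps else B y x).

Definition nonnull_cols (B : 'M[R]_n) : nat :=
  #|[set x : 'I_n | [exists y : 'I_n, B y x != 0]]|.
Definition nonnull_rows (B : 'M[R]_n) : nat :=
  #|[set y : 'I_n | [exists x : 'I_n, B y x != 0]]|.

End Defs.

(* Main.v *)
Require Import Defs.
From HB Require Import structures.
From mathcomp Require Import all_boot all_order all_algebra.
From mathcomp Require Import all_classical all_reals all_analysis.
From mathcomp Require Import ring lra.
Set Implicit Arguments. Unset Strict Implicit. Unset Printing Implicit Defensive.
Import Order.TTheory GRing.Theory Num.Theory.
Import numFieldNormedType.Exports.
Local Open Scope classical_set_scope.
Local Open Scope ring_scope.

Section S.
Variable R : realType.
Definition h (x : R) : R := - (x * ln x).

Lemma h0 : h 0 = 0. Proof. by rewrite /h mul0r oppr0. Qed.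
Lemma h1 : h 1 = 0. Proof. by rewrite /h ln1 mulr0 oppr0. Qed.
Lemma h_ge0 x : 0 <= x -> x <= 1 -> 0 <= h x.
Proof. by move=> x0 x1; rewrite /h oppr_ge0 mulr_ge0_le0 // ln_le0. Qed.
Lemma h_gt0 x : 0 < x -> x < 1 -> 0 < h x.
Proof. by move=> x0 x1; rewrite /h oppr_gt0 pmulr_rlt0 // ln_lt0 // x0 x1. Qed.

Lemma h_sqrt x : 0 < x -> h x <= 2 * Num.sqrt x.
Proof.
move=> x0.
have s0 : 0 < Num.sqrt x by rewrite sqrtr_gt0.
have ex : x = Num.sqrt x ^+ 2 by rewrite sqr_sqrtr // ltW.
have -> : h x = 2 * (Num.sqrt x * (Num.sqrt x * ln ((Num.sqrt x)^-1))).
  move: s0 ex; set s := Num.sqrt x => s0 ex.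
  rewrite /h ex lnXn // lnV ?posrE // expr2; ring.
rewrite ler_pM2l // -[X in _ <= X]mulr1 ler_pM2l //.
rewrite -ler_pdivlMl // mulr1 ltW // ln_sublinear // invr_gt0 //.
Qed.

Lemma h_cont0 : h x @[x --> 0] --> 0.
Proof.
have Hs : 2 * Num.sqrt `|x| @[x --> (0:R)] --> 0.
  have E : (0:R) = 2 * Num.sqrt `|0:R| by rewrite normr0 sqrtr0 mulr0.
  rewrite [X in _ --> X]E.
  apply: cvgMl_tmp. apply: (cvg_comp _ _ (@cvg_norm _ _ _ _ _ id _ (cvg_id))).
  exact: (@sqrt_continuous R `|0:R|).
apply: (@squeeze_cvgr _ (nbhs (0:R)) _ _ (fun x => - (2 * Num.sqrt `|x|)) (fun x => 2 * Num.sqrt `|x|)); last first.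
- exact: Hs.
- by have := cvgN Hs; rewrite oppr0; apply; apply: nbhs_filter.
near=> x.
have x1 : x <= 1 by near: x; apply: nbhs0_ltW; exact: ltr01.
have [x0|x0] := leP x 0.
  by rewrite /h ln0 // mulr0 oppr0 oppr_le0 mulr_ge0 ?sqrtr_ge0.
rewrite gtr0_norm // h_sqrt // andbT.
rewrite lerNl (le_trans _ (mulr_ge0 _ (sqrtr_ge0 x))) //.
rewrite oppr_le0 h_ge0 // ?ltW //.
Unshelve. all: end_near. Qed.

Lemma h_cont (x : R) : 0 <= x -> h y @[y --> x] --> h x.
Proof.
rewrite le_eqVlt => /orP[/eqP<-|x0]; first by rewrite h0; exact: h_cont0.
apply: cvgN; apply: cvgM; first exact: cvg_id.
exact: continuous_ln.
Qed.

Lemma cvg_sumR (I : finType) (T : Type) (F : set_system T) (FF : Filter F)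
  (f : I -> T -> R) (a : I -> R) :
  (forall i, f i x @[x --> F] --> a i) ->
  \sum_(i : I) f i x @[x --> F] --> \sum_(i : I) a i.
Proof.
move=> Hf; apply: (@cvg_big R^o I +%R 0 xpredT) => //.
exact: add_continuous.
Qed.

Definition Hn (T : finType) (p : T -> R) : R := \sum_(t : T) h (p t).

Lemma entropyE (T : finType) (p : T -> R) : entropy p = Hn p / ln 2.
Proof.
rewrite /entropy /Hn /log2 mulr_suml -sumrN; apply: eq_bigr => t _.
by rewrite /h mulrA mulNr.
Qed.

Lemma entropy_plusE (T : finType) (p : T -> R) : (forall t, 0 <= p t) ->
  entropy_plus p = Hn p / ln 2.
Proof.
move=> p0; rewrite /entropy_plus /Hn /log2 mulr_suml -sumrN big_mkcond /=.
apply: eq_bigr => t _; case: ifPn => [_|]; first by rewrite /h mulrA mulNr.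
rewrite lt_def p0 andbT negbK => /eqP->; by rewrite h0 mul0r.
Qed.

Lemma Hn_cvg (T : finType) (p : R -> T -> R) (q : T -> R) :
  (forall t, 0 <= q t) -> (forall t, p e t @[e --> 0^'+] --> q t) ->
  Hn (p e) @[e --> 0^'+] --> Hn q.
Proof.
move=> q0 Hp; apply: cvg_sumR => t.
exact: (cvg_comp _ _ (Hp t) (h_cont (q0 t))).
Qed.

Lemma ln2_gt0 : 0 < ln (2:R).
Proof. by apply: ln_gt0; rewrite ltr1n. Qed.

Lemma minr_div (a b c : R) : 0 < c -> Num.min (a / c) (b / c) = Num.min a b / c.
Proof.
move=> c0; have ci : 0 < c^-1 by rewrite invr_gt0.
have [ab|ba] := leP a b.
  have ab' : a / c <= b / c by rewrite ler_pM2r.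
  by rewrite (min_l ab').
have ab' : b / c <= a / c by rewrite ler_pM2r // ltW.
by rewrite (min_r ab').
Qed.

Lemma cvg_minR (T : Type) (F : set_system T) (FF : Filter F) (f g : T -> R) a b :
  f x @[x --> F] --> a -> g x @[x --> F] --> b ->
  Num.min (f x) (g x) @[x --> F] --> Num.min a b.
Proof.
move=> fa gb; under eq_cvg do rewrite minr_absE.
rewrite minr_absE; apply: cvgM; last exact: cvg_cst.
apply: cvgB; first exact: cvgD.
by apply: cvg_norm; apply: cvgB.
Qed.

Variable n : nat.
Implicit Types (B M : 'M[R]_n).

Lemma IAE M : IA M = (Hn (pX M) + Hn (pY M) - Hn (pXY M)) / Num.min (Hn (pX M)) (Hn (pY M)).
Proof.
rewrite /IA !entropyE minr_div ?ln2_gt0 //.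
have l2 : ln (2:R) != 0 by rewrite gt_eqF // ln2_gt0.
set a := Hn _; set b := Hn _; set c := Hn _; set m := Num.min _ _.
have [->|m0] := eqVneq m 0; first by rewrite !mul0r !invr0 !mulr0.
by field; rewrite m0 l2.
Qed.


Lemma cvg_right0 : e @[e --> (0:R)^'+] --> (0:R).
Proof. exact: (cvg_at_right_filter cvg_id). Qed.

Lemma zf_cvg B y x : (zero_freed B e) y x @[e --> 0^'+] --> B y x.
Proof.
under eq_cvg do rewrite mxE.
case: eqP => [->|_]; [exact: cvg_right0 | exact: cvg_cst].
Qed.

Lemma Ssum_cvg B : Ssum (zero_freed B e) @[e --> 0^'+] --> Ssum B.
Proof. apply: cvg_sumR => y; apply: cvg_sumR => x; exact: zf_cvg. Qed.

Lemma pX_cvg B x : Ssum B != 0 -> pX (zero_freed B e) x @[e --> 0^'+] --> pX B x.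
Proof.
move=> S0; apply: cvgM; first by apply: cvg_sumR => y; exact: zf_cvg.
by apply: cvgV => //; exact: Ssum_cvg.
Qed.

Lemma pY_cvg B y : Ssum B != 0 -> pY (zero_freed B e) y @[e --> 0^'+] --> pY B y.
Proof.
move=> S0; apply: cvgM; first by apply: cvg_sumR => x; exact: zf_cvg.
by apply: cvgV => //; exact: Ssum_cvg.
Qed.

Lemma pXY_cvg B yx : Ssum B != 0 -> pXY (zero_freed B e) yx @[e --> 0^'+] --> pXY B yx.
Proof.
move=> S0; apply: cvgM; first exact: zf_cvg.
by apply: cvgV => //; exact: Ssum_cvg.
Qed.

Lemma Ssum_ge0 B : (forall y x, 0 <= B y x) -> 0 <= Ssum B.
Proof. by move=> B0; apply: sumr_ge0 => y _; apply: sumr_ge0. Qed.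

Lemma pX_ge0 B x : (forall y x, 0 <= B y x) -> 0 <= pX B x.
Proof. by move=> B0; apply: divr_ge0; [apply: sumr_ge0|apply: Ssum_ge0]. Qed.
Lemma pY_ge0 B y : (forall y x, 0 <= B y x) -> 0 <= pY B y.
Proof. by move=> B0; apply: divr_ge0; [apply: sumr_ge0|apply: Ssum_ge0]. Qed.
Lemma pXY_ge0 B yx : (forall y x, 0 <= B y x) -> 0 <= pXY B yx.
Proof. by move=> B0; apply: divr_ge0; [apply: B0|apply: Ssum_ge0]. Qed.

Lemma IA_pos B : (forall y x, 0 <= B y x) -> Ssum B != 0 ->
  0 < Num.min (Hn (pX B)) (Hn (pY B)) ->
  IA (zero_freed B e) @[e --> 0^'+] -->
  (Hn (pX B) + Hn (pY B) - Hn (pXY B)) / Num.min (Hn (pX B)) (Hn (pY B)).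
Proof.
move=> B0 S0 m0.
have hx := Hn_cvg (fun t => @pX_ge0 B t B0) (fun t => @pX_cvg B t S0).
have hy := Hn_cvg (fun t => @pY_ge0 B t B0) (fun t => @pY_cvg B t S0).
have hxy := Hn_cvg (fun t => @pXY_ge0 B t B0) (fun t => @pXY_cvg B t S0).
under eq_cvg do rewrite IAE.
apply: cvgM; first by apply: cvgB; first apply: cvgD.
apply: cvgV; first by rewrite gt_eqF.
exact: cvg_minR.
Qed.


Lemma invL : (- ln e)^-1 @[e --> (0:R)^'+] --> 0.
Proof.
apply/cvgr0Pnorm_le => eps eps0.
have H := (cvgrNyPle _).1 (@lnNy R) (- (2 * eps^-1)).
near=> e.
have Le : ln e <= - (2 * eps^-1) by near: e; exact: H.
have ie : 0 < eps^-1 by rewrite invr_gt0.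
have Lp : 0 < - ln e by lra.
rewrite ger0_norm ?invr_ge0 ?ltW //.
rewrite -(ltr_pM2l Lp) mulfV ?gt_eqF //.
have : eps * eps^-1 = 1 by rewrite mulfV // gt_eqF.
nra.
Unshelve. all: end_near. Qed.

Lemma N_cvg0 : e * (- ln e) @[e --> (0:R)^'+] --> 0.
Proof.
have := cvg_at_right_filter (@h_cont0).
by under eq_cvg do rewrite /h -mulrN.
Qed.

Lemma oe (E : R -> R) (K : R) :
  (\forall e \near 0^'+, `|E e| <= K * e) ->
  E e / (e * - ln e) @[e --> (0:R)^'+] --> 0.
Proof.
move=> HE; apply/cvgr0Pnorm_le => eps eps0.
have K1 : 0 < `|K| + 1 by rewrite ltr_pwDr // normr_ge0.
have H : \forall t \near (0:R)^'+, `|(- ln t)^-1| <= eps / (`|K| + 1).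
  by move: invL => /cvgr0Pnorm_le; apply; exact: divr_gt0.
near=> e.
have e0 : 0 < e by near: e; exact: nbhs_right_gt.
have e1 : e < 1 by near: e; exact: nbhs_right_lt.
have Lp : 0 < - ln e by rewrite oppr_gt0 ln_lt0 // e0 e1.
have HL : (- ln e)^-1 <= eps / (`|K| + 1).
  have : `|(- ln e)^-1| <= eps / (`|K| + 1) by near: e; exact: H.
  by rewrite ger0_norm // invr_ge0; apply: ltW.
have HEe : `|E e| <= K * e by near: e; exact: HE.
move: HL Lp; set L := - ln e => HL Lp.
rewrite ler_pdivlMr // in HL.
have LL : L * L^-1 = 1 by rewrite mulfV // gt_eqF.
have KL : `|K| + 1 <= eps * L by nra.
rewrite normrM normfV (gtr0_norm (mulr_gt0 e0 Lp)) ler_pdivrMr ?mulr_gt0 //.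
have : K <= `|K| by exact: ler_norm.
nra.
Unshelve. all: end_near. Qed.

Lemma h_mul (k q : R) : 0 < k -> 0 < q -> h (k * q) = k * h q - k * q * ln k.
Proof. by move=> k0 q0; rewrite /h lnM ?posrE //; ring. Qed.

Lemma h_lip (p q : R) : 0 < q -> q <= p -> p <= 1 -> `|h p - h q| <= (p - q) / p.
Proof.
move=> q0 qp p1.
have p0 : 0 < p by exact: lt_le_trans qp.
have E : h p - h q = (p - q) * (- ln p) - q * (ln p - ln q) by rewrite /h; ring.
have ip0 : 0 < p^-1 by rewrite invr_gt0.
have ip1 : 1 <= p^-1 by rewrite invf_cp1.
have l1 : - ln p <= p^-1 - 1.
  rewrite -lnV ?posrE //.
  have H1 := @le_ln1Dx R (p^-1 - 1).
  rewrite (_ : 1 + (p^-1 - 1) = p^-1) in H1; last by ring.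
  apply: H1; lra.
have l2 : 0 <= - ln p by rewrite oppr_ge0 ln_le0.
have l3 : 0 <= ln p - ln q by rewrite subr_ge0 ler_ln ?posrE.
have l4 : ln p - ln q <= p / q - 1.
  rewrite -ln_div ?posrE //.
  have H1 := @le_ln1Dx R (p / q - 1).
  rewrite (_ : 1 + (p / q - 1) = p / q) in H1; last by ring.
  apply: H1; have : 0 < p / q by rewrite divr_gt0.
  lra.
have pq0 : 0 <= p - q by rewrite subr_ge0.
have A1 : (p - q) * (- ln p) <= (p - q) * (p^-1 - 1) by rewrite ler_wpM2l.
have A0 : 0 <= (p - q) * (- ln p) by rewrite mulr_ge0.
have C1 : q * (ln p - ln q) <= q * (p / q - 1) by rewrite ler_wpM2l // ltW.
have C0 : 0 <= q * (ln p - ln q) by rewrite mulr_ge0 // ltW.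
have Cq : q * (p / q - 1) = p - q by field; rewrite gt_eqF.
have P1 : p - q <= (p - q) / p by rewrite -[X in X <= _]mulr1 ler_wpM2l.
have P2 : (p - q) / p = (p - q) * (p^-1 - 1) + (p - q) by ring.
rewrite E ler_norml; apply/andP; split; lra.
Qed.


Lemma sum_neq_const (c : R) (y0 : 'I_n) : \sum_(y | y != y0) c = n.-1%:R * c.
Proof. by rewrite sumr_const cardC1 card_ord mulr_natl. Qed.

Lemma near_cvg (f g : R -> R) (l : R) :
  (\forall e \near (0:R)^'+, f e = g e) -> g e @[e --> (0:R)^'+] --> l ->
  f e @[e --> (0:R)^'+] --> l.
Proof.
move=> fg gl; apply: cvg_trans gl; apply: near_eq_cvg.
by apply: filterS fg => e ->.
Qed.

Section Deg.
Variables (B : 'M[R]_n) (y0 : 'I_n).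
Hypothesis B0 : forall y x, 0 <= B y x.
Hypothesis Brow : forall y, y != y0 -> forall x, B y x = 0.

Local Notation M e := (zero_freed B e).
Local Notation r0 e := (\sum_(x < n) zero_freed B e y0 x).
Local Notation Se e := (Ssum (zero_freed B e)).

Lemma Mrow e y x : y != y0 -> M e y x = e.
Proof. by move=> yy; rewrite mxE Brow // eqxx. Qed.
Lemma MnJ e x : B y0 x = 0 -> M e y0 x = e.
Proof. by move=> bx; rewrite mxE bx eqxx. Qed.
Lemma MJ e x : B y0 x != 0 -> M e y0 x = B y0 x.
Proof. by move=> bx; rewrite mxE (negbTE bx). Qed.
Lemma M_ge e y x : 0 <= e -> B y x <= M e y x.
Proof. by move=> e0; rewrite mxE; case: eqP => [->|]. Qed.
Lemma M_gt0 e y x : 0 < e -> 0 < M e y x.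
Proof. by move=> e0; rewrite mxE; case: eqP => // /eqP bx; rewrite lt_def bx B0. Qed.

Lemma colsum e x : \sum_y M e y x = M e y0 x + n.-1%:R * e.
Proof.
rewrite (bigD1 y0) //=; congr (_ + _).
by rewrite -(sum_neq_const _ y0); apply: eq_bigr => y yy; rewrite Mrow.
Qed.

Lemma rowsum e y : y != y0 -> \sum_x M e y x = n%:R * e.
Proof.
by move=> yy; rewrite (eq_bigr (fun _ => e)) ?sumr_const ?card_ord ?mulr_natl // => x _; rewrite Mrow.
Qed.

Lemma Se_eq e : Se e = r0 e + n.-1%:R * (n%:R * e).
Proof.
rewrite /Ssum (bigD1 y0) //=; congr (_ + _).
by rewrite -(sum_neq_const _ y0); apply: eq_bigr => y yy; rewrite rowsum.
Qed.

Lemma HY_eq e : Hn (pY (M e)) = h (r0 e / Se e) + n.-1%:R * h (n%:R * e / Se e).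
Proof.
rewrite /Hn (bigD1 y0) //=; congr (_ + _).
by rewrite -(sum_neq_const _ y0); apply: eq_bigr => y yy; rewrite /pY rowsum.
Qed.

Lemma HX_eq e : Hn (pX (M e)) = \sum_x h ((M e y0 x + n.-1%:R * e) / Se e).
Proof. by apply: eq_bigr => x _; rewrite /pX colsum. Qed.

Lemma HXY_eq e : Hn (pXY (M e)) = \sum_x h (M e y0 x / Se e) + (n.-1 * n)%:R * h (e / Se e).
Proof.
rewrite /Hn /pXY -(pair_bigA _ (fun y x => h (M e y x / Se e))) /=.
rewrite (bigD1 y0) //=; congr (_ + _).
rewrite natrM -mulrA -(sum_neq_const _ y0); apply: eq_bigr => y yy.
by rewrite (eq_bigr (fun _ => h (e / Se e))) ?sumr_const ?card_ord ?mulr_natl // => x _; rewrite Mrow.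
Qed.

Lemma n_gt0 : (0 < n)%N.
Proof. exact: (leq_ltn_trans (leq0n _) (ltn_ord y0)). Qed.

Lemma nE : n%:R = n.-1%:R + 1 :> R.
Proof. by rewrite natr1 prednK // n_gt0. Qed.

Lemma cardnJ : #|[pred x | B y0 x == 0%R]| = (n - #|[set x | B y0 x != 0%R]%SET|)%N.
Proof.
rewrite -[n in (n - _)%N](card_ord n) -(cardC [set x | B y0 x != 0%R]%SET) addKn.
by apply: eq_card => x; rewrite !inE negbK.
Qed.

Lemma I_eq e : Hn (pX (M e)) + Hn (pY (M e)) - Hn (pXY (M e)) =
  \sum_(x | B y0 x != 0) (h ((M e y0 x + n.-1%:R * e) / Se e) - h (M e y0 x / Se e))
  + (n - #|[set x | B y0 x != 0%R]%SET|)%:R * (h (n%:R * e / Se e) - h (e / Se e))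
  - (n.-1 * n)%:R * h (e / Se e) + Hn (pY (M e)).
Proof.
have D : \sum_x h ((M e y0 x + n.-1%:R * e) / Se e) - \sum_x h (M e y0 x / Se e) =
  \sum_(x | B y0 x != 0) (h ((M e y0 x + n.-1%:R * e) / Se e) - h (M e y0 x / Se e))
  + (n - #|[set x | B y0 x != 0%R]%SET|)%:R * (h (n%:R * e / Se e) - h (e / Se e)).
  rewrite -sumrB (bigID (fun x => B y0 x != 0)) /=; congr (_ + _).
  rewrite (eq_bigr (fun _ => h (n%:R * e / Se e) - h (e / Se e))); last first.
    move=> x; rewrite negbK => /eqP bx; rewrite MnJ //.
    by congr (h (_ / _) - _); rewrite nE; ring.
  rewrite (eq_bigl (fun x => B y0 x == 0)); last by move=> x; rewrite negbK.
  rewrite sumr_const -cardnJ [RHS]mulr_natl; congr (_ *+ _); exact: eq_card.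
rewrite HX_eq HXY_eq; lra.
Qed.

Hypothesis S0 : 0 < Ssum B.
Hypothesis n2 : (2 <= n)%N.

Lemma S_row : Ssum B = \sum_x B y0 x.
Proof.
rewrite /Ssum (bigD1 y0) //= [X in _ + X]big1 ?addr0 // => y yy.
by rewrite big1 // => x _; rewrite Brow.
Qed.

Lemma r0_ge e : 0 <= e -> Ssum B <= r0 e.
Proof. by move=> e0; rewrite S_row; apply: ler_sum => x _; apply: M_ge. Qed.

Lemma Se_ge e : 0 <= e -> Ssum B <= Se e.
Proof.
move=> e0; rewrite Se_eq; apply: le_trans (r0_ge e0) _.
by rewrite lerDl mulr_ge0 // mulr_ge0.
Qed.

Lemma Se_gt0 e : 0 <= e -> 0 < Se e.
Proof. by move=> e0; apply: lt_le_trans (Se_ge e0). Qed.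

Lemma Se_cvg : Se e @[e --> 0^'+] --> Ssum B.
Proof. exact: Ssum_cvg. Qed.

Lemma g_lim : h (e / Se e) / (e * - ln e) @[e --> 0^'+] --> (Ssum B)^-1.
Proof.
apply: (@near_cvg _ (fun e => (Se e)^-1 + (Se e)^-1 * ln (Se e) * (- ln e)^-1)).
  near=> e.
  have e0 : 0 < e by near: e; exact: nbhs_right_gt.
  have e1 : e < 1 by near: e; exact: nbhs_right_lt.
  have Lp : 0 < - ln e by rewrite oppr_gt0 ln_lt0 // e0 e1.
  have Sp := Se_gt0 (ltW e0).
  rewrite /h ln_div ?posrE //.
  have lne : ln e != 0 by rewrite ltr0_neq0 // ln_lt0 // e0 e1.
  by field; rewrite lne !gt_eqF.
have Sn : Ssum B != 0 by rewrite gt_eqF.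
have SV : (Se e)^-1 @[e --> 0^'+] --> (Ssum B)^-1 by apply: cvgV => //; exact: Se_cvg.
have -> : (Ssum B)^-1 = (Ssum B)^-1 + (Ssum B)^-1 * ln (Ssum B) * 0 by rewrite mulr0 addr0.
apply: cvgD => //.
apply: cvgM; last exact: invL.
apply: cvgM => //.
exact: (cvg_comp _ _ Se_cvg (continuous_ln S0)).
Unshelve. all: end_near. Qed.

Lemma hn_eq e : 0 < e ->
  h (n%:R * e / Se e) = n%:R * h (e / Se e) - n%:R * ln n%:R * (e / Se e).
Proof.
move=> e0; have Sp := Se_gt0 (ltW e0).
rewrite -mulrA h_mul ?ltr0n ?n_gt0 ?divr_gt0 //; ring.
Qed.

Lemma div_le (c a b : R) : 0 <= c -> 0 < a -> a <= b -> c / b <= c / a.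
Proof.
move=> c0 a0 ab; rewrite ler_wpM2l // lef_pV2 ?posrE //.
exact: lt_le_trans ab.
Qed.

Lemma hr0_bound e : 0 < e -> `|h (r0 e / Se e)| <= ((n.-1 * n)%:R / Ssum B) * e.
Proof.
move=> e0; have Sp := Se_gt0 (ltW e0).
have r0p : 0 < r0 e := lt_le_trans S0 (r0_ge (ltW e0)).
have c0 : 0 <= n.-1%:R * (n%:R * e) :> R by rewrite mulr_ge0 // mulr_ge0 // ltW.
have q0 : 0 < r0 e / Se e by rewrite divr_gt0.
have q1 : r0 e / Se e <= 1 by rewrite ler_pdivrMr // mul1r Se_eq lerDl.
have := h_lip q0 q1 (lexx (1:R)); rewrite h1 sub0r normrN divr1 => H.
apply: le_trans H _.
have -> : 1 - r0 e / Se e = (Se e - r0 e) / Se e by field; rewrite gt_eqF.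
have -> : Se e - r0 e = n.-1%:R * (n%:R * e) by rewrite Se_eq; ring.
have -> : (n.-1 * n)%:R / Ssum B * e = n.-1%:R * (n%:R * e) / Ssum B.
  by rewrite natrM; field; rewrite gt_eqF.
exact: div_le (Se_ge (ltW e0)).
Qed.

Lemma HY_lim : Hn (pY (M e)) / (e * - ln e) @[e --> 0^'+] --> (n.-1 * n)%:R / Ssum B.
Proof.
apply: (@near_cvg _ (fun e => h (r0 e / Se e) / (e * - ln e) + n.-1%:R *
   (n%:R * (h (e / Se e) / (e * - ln e)) - n%:R * ln n%:R * ((Se e)^-1 * (- ln e)^-1)))).
  near=> e.
  have e0 : 0 < e by near: e; exact: nbhs_right_gt.
  have e1 : e < 1 by near: e; exact: nbhs_right_lt.
  have Sp := Se_gt0 (ltW e0).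
  have lne : ln e != 0 by rewrite ltr0_neq0 // ln_lt0 // e0 e1.
  rewrite HY_eq hn_eq //.
  by field; rewrite lne !gt_eqF.
have -> : (n.-1 * n)%:R / Ssum B = 0 + n.-1%:R *
   (n%:R * (Ssum B)^-1 - n%:R * ln n%:R * ((Ssum B)^-1 * 0)) by rewrite natrM; ring.
apply: cvgD.
  apply: (@oe _ ((n.-1 * n)%:R / Ssum B)).
  near=> e; apply: hr0_bound; near: e; exact: nbhs_right_gt.
apply: cvgMl_tmp; apply: cvgB; first by apply: cvgMl_tmp; exact: g_lim.
apply: cvgMl_tmp; apply: cvgM; last exact: invL.
by apply: cvgV; [rewrite gt_eqF | exact: Se_cvg].
Unshelve. all: end_near. Qed.

Lemma SJ_bound e : 0 < e ->
  `|\sum_(x | B y0 x != 0) (h ((M e y0 x + n.-1%:R * e) / Se e) - h (M e y0 x / Se e))|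
  <= (\sum_(x | B y0 x != 0) n.-1%:R / B y0 x) * e.
Proof.
move=> e0; have Sp := Se_gt0 (ltW e0).
apply: le_trans (ler_norm_sum _ _ _) _.
rewrite mulr_suml; apply: ler_sum => x bx.
have b0 : 0 < B y0 x by rewrite lt_def bx B0.
rewrite MJ //.
have ne0 : 0 <= n.-1%:R * e :> R by rewrite mulr_ge0 // ltW.
have q0 : 0 < B y0 x / Se e by rewrite divr_gt0.
have qp : B y0 x / Se e <= (B y0 x + n.-1%:R * e) / Se e.
  by rewrite ler_pM2r ?invr_gt0 // lerDl.
have bx_r0 : B y0 x <= r0 e.
  rewrite (bigD1 x) //= MJ // lerDl; apply: sumr_ge0 => i _; exact: ltW (M_gt0 _ _ e0).
have p1 : (B y0 x + n.-1%:R * e) / Se e <= 1.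
  rewrite ler_pdivrMr // mul1r Se_eq; apply: lerD => //.
  by rewrite ler_wpM2l // ler_peMl ?ltW // ltr1n.
apply: le_trans (h_lip q0 qp p1) _.
set p := (B y0 x + n.-1%:R * e) / Se e; set q := B y0 x / Se e.
have pq : 0 <= p - q by rewrite subr_ge0.
apply: le_trans (_ : (p - q) / q <= _).
  by rewrite ler_wpM2l // lef_pV2 ?posrE // (lt_le_trans q0 qp).
have -> : (p - q) / q = n.-1%:R / B y0 x * e.
  by rewrite /p /q; field; rewrite !gt_eqF.
done.
Qed.

Lemma I_lim : (Hn (pX (M e)) + Hn (pY (M e)) - Hn (pXY (M e))) / (e * - ln e)
  @[e --> 0^'+] --> (n.-1 * (n - #|[set x | B y0 x != 0%R]%SET|))%:R / Ssum B.
Proof.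
set l := #|_|.
apply: (@near_cvg _ (fun e =>
   (\sum_(x | B y0 x != 0) (h ((M e y0 x + n.-1%:R * e) / Se e) - h (M e y0 x / Se e)))
     / (e * - ln e)
   + (n - l)%:R * (n.-1%:R * (h (e / Se e) / (e * - ln e))
                   - n%:R * ln n%:R * ((Se e)^-1 * (- ln e)^-1))
   - (n.-1 * n)%:R * (h (e / Se e) / (e * - ln e))
   + Hn (pY (M e)) / (e * - ln e))).
  near=> e.
  have e0 : 0 < e by near: e; exact: nbhs_right_gt.
  have e1 : e < 1 by near: e; exact: nbhs_right_lt.
  have Sp := Se_gt0 (ltW e0).
  have lne : ln e != 0 by rewrite ltr0_neq0 // ln_lt0 // e0 e1.
  rewrite I_eq hn_eq // nE.
  by field; rewrite lne !gt_eqF.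
have -> : (n.-1 * (n - l))%:R / Ssum B = 0 + (n - l)%:R *
   (n.-1%:R * (Ssum B)^-1 - n%:R * ln n%:R * ((Ssum B)^-1 * 0))
   - (n.-1 * n)%:R * (Ssum B)^-1 + (n.-1 * n)%:R / Ssum B by rewrite !natrM; ring.
apply: cvgD; last exact: HY_lim.
apply: cvgB; last by apply: cvgMl_tmp; exact: g_lim.
apply: cvgD.
  apply: (@oe _ (\sum_(x | B y0 x != 0) n.-1%:R / B y0 x)).
  near=> e; apply: SJ_bound; near: e; exact: nbhs_right_gt.
apply: cvgMl_tmp; apply: cvgB; first by apply: cvgMl_tmp; exact: g_lim.
apply: cvgMl_tmp; apply: cvgM; last exact: invL.
by apply: cvgV; [rewrite gt_eqF | exact: Se_cvg].
Unshelve. all: end_near. Qed.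

End Deg.

Lemma zf_tr B e : zero_freed B^T e = (zero_freed B e)^T.
Proof. by apply/matrixP => y x; rewrite !mxE. Qed.

Lemma Ssum_tr M : Ssum M^T = Ssum M.
Proof.
rewrite /Ssum exchange_big; apply: eq_bigr => y _; apply: eq_bigr => x _.
by rewrite mxE.
Qed.

Lemma pX_tr M : pX M^T = pY M.
Proof.
apply: funext => x; rewrite /pX /pY Ssum_tr; congr (_ / _).
by apply: eq_bigr => y _; rewrite mxE.
Qed.

Lemma pY_tr M : pY M^T = pX M.
Proof.
apply: funext => x; rewrite /pX /pY Ssum_tr; congr (_ / _).
by apply: eq_bigr => y _; rewrite mxE.
Qed.

Lemma HXY_tr M : Hn (pXY M^T) = Hn (pXY M).
Proof.
rewrite /Hn /pXY Ssum_tr.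
rewrite -(pair_bigA _ (fun y x => h (M^T y x / Ssum M))).
rewrite -(pair_bigA _ (fun y x => h (M y x / Ssum M))) exchange_big.
by apply: eq_bigr => y _; apply: eq_bigr => x _; rewrite mxE.
Qed.

Lemma IA_tr M : IA M^T = IA M.
Proof. by rewrite !IAE pX_tr pY_tr HXY_tr minC (addrC (Hn (pY M))). Qed.

Lemma nonnull_tr B : nonnull_cols B^T = nonnull_rows B.
Proof.
rewrite /nonnull_cols /nonnull_rows; apply: eq_card => x; rewrite !inE.
by apply/existsP/existsP => -[y Hy]; exists y; move: Hy; rewrite mxE.
Qed.

Lemma sum_pY B : Ssum B != 0 -> \sum_y pY B y = 1.
Proof. by move=> S0; rewrite /pY -mulr_suml divff. Qed.

Lemma pY_le1 B y : (forall y x, 0 <= B y x) -> Ssum B != 0 -> pY B y <= 1.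
Proof.
move=> B0 S0; rewrite -(sum_pY S0) (bigD1 y) //= lerDl.
by apply: sumr_ge0 => i _; apply: pY_ge0.
Qed.

Lemma pX_le1 B x : (forall y x, 0 <= B y x) -> Ssum B != 0 -> pX B x <= 1.
Proof.
move=> B0 S0; rewrite -pY_tr; apply: pY_le1; last by rewrite Ssum_tr.
by move=> ? ?; rewrite mxE.
Qed.

Lemma Hn_ge0 (T : finType) (p : T -> R) : (forall t, 0 <= p t <= 1) -> 0 <= Hn p.
Proof. by move=> H; apply: sumr_ge0 => t _; case/andP: (H t) => *; apply: h_ge0. Qed.

Lemma row_struct B : (forall y x, 0 <= B y x) -> 0 < Ssum B ->
  Hn (pY B) = 0 -> exists y0, forall y, y != y0 -> forall x, B y x = 0.
Proof.
move=> B0 S0 H0.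
have Sn : Ssum B != 0 by rewrite gt_eqF.
have hp : forall y, h (pY B y) = 0.
  move=> y; move/eqP: H0; rewrite psumr_eq0 => [/allP/(_ y)|].
    by rewrite mem_index_enum => /(_ isT) /eqP.
  by move=> i _; apply: h_ge0; [apply: pY_ge0 | apply: pY_le1].
have [y0 py0] : exists y0, 0 < pY B y0.
  apply/existsP; apply: contraT; rewrite negb_exists => /forallP Hall.
  have : \sum_y pY B y = 0.
    by apply: big1 => y _; apply/eqP; rewrite eq_le pY_ge0 // andbT leNgt Hall.
  by rewrite sum_pY // => /eqP; rewrite oner_eq0.
have p1 : pY B y0 = 1.
  apply/eqP; rewrite eq_le pY_le1 //=; rewrite leNgt; apply/negP => lt1.
  by have := h_gt0 py0 lt1; rewrite hp ltxx.
exists y0 => y yy x.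
have : \sum_(i | i != y0) pY B i = 0.
  by have := sum_pY Sn; rewrite (bigD1 y0) //= p1 => H; lra.
move/eqP; rewrite psumr_eq0 => [/allP/(_ y)|i _]; last exact: pY_ge0.
rewrite mem_index_enum yy => /(_ isT) /eqP.
rewrite /pY => /eqP; rewrite mulf_eq0 invr_eq0 (negbTE Sn) orbF psumr_eq0 => [/allP/(_ x)|]; last by move=> *.
by rewrite mem_index_enum => /(_ isT) /eqP.
Qed.

Lemma Ssum_gt0 B : (forall y x, 0 <= B y x) -> (exists y x, B y x != 0) -> 0 < Ssum B.
Proof.
move=> B0 [y [x bx]].
have bp : 0 < B y x by rewrite lt_def bx B0.
apply: lt_le_trans bp _; rewrite /Ssum (bigD1 y) //= (bigD1 x) //= -addrA lerDl.
apply: addr_ge0; first by apply: sumr_ge0 => *; apply: B0.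
by apply: sumr_ge0 => *; apply: sumr_ge0 => *; apply: B0.
Qed.

Lemma caseY B : (2 <= n)%N -> (forall y x, 0 <= B y x) -> 0 < Ssum B -> Hn (pY B) = 0 ->
  IA (zero_freed B e) @[e --> 0^'+] --> ((n%:R - (nonnull_cols B)%:R) / n%:R : R).
Proof.
move=> n2 B0 S0 HY0.
have [y0 Brow] := row_struct B0 S0 HY0.
have Sn : Ssum B != 0 by rewrite gt_eqF.
set l := #|[set x | B y0 x != 0%R]%SET|.
have lE : nonnull_cols B = l.
  rewrite /nonnull_cols; apply: eq_card => x; rewrite !inE.
  apply/existsP/idP => [[y]|bx]; last by exists y0.
  by have [->|yy] := eqVneq y y0; [|rewrite Brow ?eqxx].
have lnn : (l <= n)%N by have := max_card (mem [set x | B y0 x != 0%R]%SET); rewrite card_ord.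
have n1 : n.-1%:R != 0 :> R by rewrite pnatr_eq0 -lt0n -ltnS prednK // (leq_trans _ n2).
have nn : n%:R != 0 :> R by rewrite pnatr_eq0 -lt0n (leq_trans _ n2).
set c := (n.-1 * n)%:R / Ssum B.
have c0 : c != 0 by rewrite /c mulf_neq0 ?invr_eq0 // natrM mulf_neq0.
have HYl := HY_lim Brow S0.
have Hmin : Num.min (Hn (pX (zero_freed B e))) (Hn (pY (zero_freed B e))) / (e * - ln e)
    @[e --> 0^'+] --> c.
  have : 0 <= Hn (pX B) by apply: Hn_ge0 => t; rewrite pX_ge0 // pX_le1.
  rewrite le_eqVlt => /orP[/eqP HX0|HXp].
  - have B0' : forall y x, 0 <= B^T y x by move=> ? ?; rewrite mxE.
    have S0' : 0 < Ssum B^T by rewrite Ssum_tr.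
    have HX0' : Hn (pY B^T) = 0 by rewrite pY_tr -HX0.
    have [x0 Bcol] := row_struct B0' S0' HX0'.
    have := HY_lim Bcol S0'; rewrite Ssum_tr.
    under eq_cvg do rewrite zf_tr pY_tr.
    move=> HXl.
    apply: (@near_cvg _ (fun e => Num.min (Hn (pX (zero_freed B e)) / (e * - ln e))
                                        (Hn (pY (zero_freed B e)) / (e * - ln e)))).
      near=> e.
      have e0 : 0 < e by near: e; exact: nbhs_right_gt.
      have e1 : e < 1 by near: e; exact: nbhs_right_lt.
      have Lp : 0 < - ln e by rewrite oppr_gt0 ln_lt0 // e0 e1.
      by rewrite minr_div // mulr_gt0.
    by rewrite -[c]minxx; apply: cvg_minR.
  - have hx := Hn_cvg (fun t => @pX_ge0 B t B0) (fun t => @pX_cvg B t Sn).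
    have hy0 : Hn (pY (zero_freed B e)) @[e --> 0^'+] --> 0.
      apply: (@near_cvg _ (fun e => Hn (pY (zero_freed B e)) / (e * - ln e) * (e * - ln e))).
        near=> e.
        have e0 : 0 < e by near: e; exact: nbhs_right_gt.
        have e1 : e < 1 by near: e; exact: nbhs_right_lt.
        have Lp : 0 < - ln e by rewrite oppr_gt0 ln_lt0 // e0 e1.
        by rewrite divfK // gt_eqF // mulr_gt0.
      by have := cvgM HYl N_cvg0; rewrite mulr0; apply; exact: _.
    have h2 : 0 < Hn (pX B) / 2 by rewrite divr_gt0.
    have h2' : Hn (pX B) / 2 < Hn (pX B) by rewrite ltr_pdivrMr // ltr_pMr // ltr1n.
    apply: near_cvg HYl.
    near=> e.
    have a1 : Hn (pY (zero_freed B e)) < Hn (pX B) / 2 by near: e; exact: (cvgr_lt _ hy0 _ h2).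
    have a2 : Hn (pX B) / 2 < Hn (pX (zero_freed B e)) by near: e; exact: (cvgr_gt _ hx _ h2').
    by rewrite min_r // ltW // (lt_trans a1 a2).
apply: (@near_cvg _ (fun e => (Hn (pX (zero_freed B e)) + Hn (pY (zero_freed B e))
     - Hn (pXY (zero_freed B e))) / (e * - ln e) /
    (Num.min (Hn (pX (zero_freed B e))) (Hn (pY (zero_freed B e))) / (e * - ln e)))).
  near=> e.
  have e0 : 0 < e by near: e; exact: nbhs_right_gt.
  have e1 : e < 1 by near: e; exact: nbhs_right_lt.
  have Lp : 0 < - ln e by rewrite oppr_gt0 ln_lt0 // e0 e1.
  by rewrite IAE invf_div mulrA divfK // gt_eqF // mulr_gt0.
have -> : (n%:R - (nonnull_cols B)%:R) / n%:R = (n.-1 * (n - l))%:R / Ssum B / c.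
  rewrite lE /c !natrM natrB //; field.
  by rewrite Sn n1 nn.
apply: cvgM; first exact: I_lim.
exact: cvgV.
Unshelve. all: end_near. Qed.

Lemma caseX B : (2 <= n)%N -> (forall y x, 0 <= B y x) -> 0 < Ssum B -> Hn (pX B) = 0 ->
  IA (zero_freed B e) @[e --> 0^'+] --> ((n%:R - (nonnull_rows B)%:R) / n%:R : R).
Proof.
move=> n2 B0 S0 HX0.
have B0' : forall y x, 0 <= B^T y x by move=> ? ?; rewrite mxE.
have S0' : 0 < Ssum B^T by rewrite Ssum_tr.
have HX0' : Hn (pY B^T) = 0 by rewrite pY_tr.
have := caseY n2 B0' S0' HX0'; rewrite nonnull_tr.
by under eq_cvg do rewrite zf_tr IA_tr.
Qed.

Lemma case_pos B : (forall y x, 0 <= B y x) -> Ssum B != 0 ->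
  0 < Hn (pX B) -> Hn (pX B) <= Hn (pY B) ->
  IA (zero_freed B e) @[e --> 0^'+] -->
  1 + (Hn (pY B) / ln 2 - Hn (pXY B) / ln 2) / (Hn (pX B) / ln 2).
Proof.
move=> B0 Sn Xp XY.
have mE : Num.min (Hn (pX B)) (Hn (pY B)) = Hn (pX B) by rewrite min_l.
have := IA_pos B0 Sn; rewrite mE => /(_ Xp).
have -> : (Hn (pX B) + Hn (pY B) - Hn (pXY B)) / Hn (pX B) =
  1 + (Hn (pY B) / ln 2 - Hn (pXY B) / ln 2) / (Hn (pX B) / ln 2).
  by field; rewrite !gt_eqF // ln2_gt0.
done.
Qed.

End S.

Unset Implicit Arguments.

Theorem corollary1 (R : realType) (n : nat) (B : 'M[R]_n) :
  (2 <= n)%N ->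
  (forall y x, 0 <= B y x) ->
  (exists y x, B y x != 0) ->
  let l := nonnull_cols B in
  let m := nonnull_rows B in
  let HX := entropy_plus (pX B) in
  let HY := entropy_plus (pY B) in
  let HXY := entropy_plus (pXY B) in
  cvg (IA (zero_freed B e) @[e --> 0^'+]) /\
  (HY = 0 -> IA (zero_freed B e) @[e --> 0^'+] --> ((n%:R - l%:R) / n%:R : R)) /\
  (HX = 0 -> IA (zero_freed B e) @[e --> 0^'+] --> ((n%:R - m%:R) / n%:R : R)) /\
  (0 < HX <= HY -> IA (zero_freed B e) @[e --> 0^'+] --> 1 + (HY - HXY) / HX) /\
  (0 < HY <= HX -> IA (zero_freed B e) @[e --> 0^'+] --> 1 + (HX - HXY) / HY).
Proof.
move=> n2 B0 Bne l m HX HY HXY.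
have S0 := Ssum_gt0 B0 Bne.
have Sn : Ssum B != 0 by rewrite gt_eqF.
have l2 := @ln2_gt0 R.
have eX : HX = Hn (pX B) / ln 2 by rewrite /HX entropy_plusE // => t; apply: pX_ge0.
have eY : HY = Hn (pY B) / ln 2 by rewrite /HY entropy_plusE // => t; apply: pY_ge0.
have eXY : HXY = Hn (pXY B) / ln 2 by rewrite /HXY entropy_plusE // => t; apply: pXY_ge0.
have hX0 : 0 <= Hn (pX B) by apply: Hn_ge0 => t; rewrite pX_ge0 // pX_le1.
have hY0 : 0 <= Hn (pY B) by apply: Hn_ge0 => t; rewrite pY_ge0 // pY_le1.
have C2 : HY = 0 -> IA (zero_freed B e) @[e --> 0^'+] --> ((n%:R - l%:R) / n%:R : R).
  rewrite eY => /eqP; rewrite mulf_eq0 invr_eq0 (gt_eqF l2) orbF => /eqP.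
  exact: caseY.
have C3 : HX = 0 -> IA (zero_freed B e) @[e --> 0^'+] --> ((n%:R - m%:R) / n%:R : R).
  rewrite eX => /eqP; rewrite mulf_eq0 invr_eq0 (gt_eqF l2) orbF => /eqP.
  exact: caseX.
have C4 : 0 < HX <= HY -> IA (zero_freed B e) @[e --> 0^'+] --> 1 + (HY - HXY) / HX.
  rewrite eX eY eXY => /andP[h1 h2].
  apply: case_pos => //.
    by have := mulr_gt0 h1 l2; rewrite divfK ?gt_eqF.
  by move: h2; rewrite ler_pM2r // invr_gt0.
have C5 : 0 < HY <= HX -> IA (zero_freed B e) @[e --> 0^'+] --> 1 + (HX - HXY) / HY.
  rewrite eX eY eXY => /andP[h1 h2].
  have B0' : forall y x, 0 <= B^T y x by move=> ? ?; rewrite mxE.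
  have Sn' : Ssum B^T != 0 by rewrite Ssum_tr.
  have := @case_pos R n B^T B0' Sn'; rewrite pX_tr pY_tr HXY_tr.
  under eq_cvg do rewrite zf_tr IA_tr.
  apply.
    by have := mulr_gt0 h1 l2; rewrite divfK ?gt_eqF.
  by move: h2; rewrite ler_pM2r // invr_gt0.
split => //.
have [Y0|Yn] := eqVneq HY 0; first exact: cvgP (C2 Y0).
have [X0|Xn] := eqVneq HX 0; first exact: cvgP (C3 X0).
have HXp : 0 < HX by rewrite lt_def Xn eX divr_ge0 // ltW.
have HYp : 0 < HY by rewrite lt_def Yn eY divr_ge0 // ltW.
have [XY|YX] := leP HX HY.
  by apply: cvgP; apply: C4; rewrite HXp XY.
by apply: cvgP; apply: C5; rewrite HYp ltW.
Qed.
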